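(* If a triangle-free oriented graph $G$ has a cut vertex, then either $G$ has a full in-star cutset, or $G$ has a vertex of degree at most $1$.
   Context: Oriented graphs are finite, without loops, multiple arcs or pairs of opposite arcs; triangle-free, cut vertex, degree and connectivity refer to the underlying graph (a cut vertex is a vertex whose removal increases the number of connected components). $N^-[v]$ is $v$ together with its in-neighbors. A full in-star cutset of $G$ is a set $N^-[v]$, for some vertex $v$, such that $G\setminus N^-[v]$ is disconnected. *)

(* Defs.v *)
From mathcomp Require Import all_boot.
Set Implicit Arguments. Unset Strict Implicit. Unset Printing Implicit Defensive.

(* An oriented graph on a finite vertex type T is given by an arc relation
   [arc : rel T] (arc x y means x -> y) with no loops and no pair of
   opposite arcs. (No multiple arcs is automatic for a relation.) *)
Definition oriented (T : finType) (arc : rel T) : Prop :=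
  (forall x, ~~ arc x x) /\ (forall x y, arc x y -> ~~ arc y x).

Definition uadj (T : finType) (arc : rel T) : rel T :=
  fun x y => arc x y || arc y x.

Definition triangle_free (T : finType) (arc : rel T) : Prop :=
  forall x y z, ~ [&& uadj arc x y, uadj arc y z & uadj arc x z].

Definition udeg (T : finType) (arc : rel T) (v : T) : nat :=
  #|[set u | uadj arc v u]|.

Definition induced_adj (T : finType) (arc : rel T) (S : {set T}) : rel T :=
  fun x y => [&& x \in S, y \in S & uadj arc x y].

Definition conn_in (T : finType) (arc : rel T) (S : {set T}) (x y : T) : bool :=
  (x \in S) && connect (induced_adj arc S) x y.

Definition ncomp (T : finType) (arc : rel T) (S : {set T}) : nat :=
  #|[set [set y | conn_in arc S x y] | x in S]|.

Definition cut_vertex (T : finType) (arc : rel T) (v : T) : Prop :=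
  ncomp arc [set: T] < ncomp arc ([set: T] :\ v).

Definition disconnected_on (T : finType) (arc : rel T) (S : {set T}) : Prop :=
  1 < ncomp arc S.

Definition in_star (T : finType) (arc : rel T) (v : T) : {set T} :=
  v |: [set u | arc u v].

Definition full_in_star_cutset (T : finType) (arc : rel T) (v : T) : Prop :=
  disconnected_on arc (~: in_star arc v).

(* Main.v *)
Require Import Defs.
From mathcomp Require Import all_boot.

Section Aux.
Variables (T : finType) (arc : rel T).

Lemma ia_sym (S : {set T}) : connect_sym (induced_adj arc S).
Proof.
apply: sym_connect_sym => x y; rewrite /induced_adj /uadj.
by rewrite andbCA [arc y x || _]orbC.
Qed.

Lemma ncomp_gt1 (S : {set T}) :
  1 < ncomp arc S <->
  exists x y, [/\ x \in S, y \in S & ~~ connect (induced_adj arc S) x y].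
Proof.
split.
- case/card_gt1P => A [B [/imsetP [x xS ->] /imsetP [y yS ->] neq]].
  exists x, y; split => //; apply/negP => cxy; move/negP: neq; apply.
  apply/eqP/setP => z; rewrite !inE /conn_in xS yS /=.
  by rewrite (same_connect (ia_sym S) cxy).
- case=> x [y [xS yS ncxy]]; apply/card_gt1P.
  exists [set z | conn_in arc S x z], [set z | conn_in arc S y z].
  split; try exact: imset_f.
  apply/negP => /eqP /setP /(_ y); rewrite !inE /conn_in xS yS /= connect0.
  by move=> h; move: ncxy; rewrite h.
Qed.

Lemma ncomp_gt0 (S : {set T}) x : x \in S -> 0 < ncomp arc S.
Proof.
move=> xS; rewrite /ncomp card_gt0; apply/set0Pn.
by exists [set z | conn_in arc S x z]; apply: imset_f.
Qed.

Lemma conn_mono (S S' : {set T}) x y : S' \subset S ->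
  connect (induced_adj arc S') x y -> connect (induced_adj arc S) x y.
Proof.
move=> sub; apply: connect_sub => a b /and3P [aS bS ab].
by apply: connect1; rewrite /induced_adj (subsetP sub _ aS) (subsetP sub _ bS).
Qed.

End Aux.

Theorem lemma5p4 (T : finType) (arc : rel T) :
  oriented arc -> triangle_free arc ->
  (exists v : T, cut_vertex arc v) ->
  (exists v : T, full_in_star_cutset arc v) \/
  (exists v : T, udeg arc v <= 1).
Proof.
move=> [irr asym] tf [v cut].
case: (boolP [exists u, udeg arc u <= 1]) => [/existsP [u hu]|noleaf];
  first by right; exists u.
left; exists v.
have deg2 : forall u, 1 < udeg arc u.
  by move=> u; rewrite ltnNge; apply/negP => h; move/existsP: noleaf; apply; exists u.
have gt1 : 1 < ncomp arc ([set: T] :\ v).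
  by apply: leq_ltn_trans cut; apply: (@ncomp_gt0 _ _ _ v); rewrite inE.
have good : forall x, x \in [set: T] :\ v -> exists y,
    y \in ~: in_star arc v /\ connect (induced_adj arc ([set: T] :\ v)) x y.
  move=> x xS.
  case: (boolP (uadj arc x v)) => hxv; last first.
    exists x; split => //; rewrite !inE negb_or.
    move: xS; rewrite !inE andbT => ->; move: hxv; rewrite /uadj negb_or.
    by case/andP.
  have [w /andP [xw wv]] : exists w, uadj arc x w && (w != v).
    case: (boolP [exists w, uadj arc x w && (w != v)]) => [/existsP //|].
    rewrite negb_exists => /forallP H; exfalso.
    have : [set u | uadj arc x u] \subset [set v].
      apply/subsetP => u; rewrite !inE => xu; move: (H u).
      by rewrite xu /= negbK.
    move/subset_leq_card; rewrite cards1 => h.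
    by move: (deg2 x); rewrite /udeg ltnNge h.
  have nwv : ~~ uadj arc w v.
    by apply/negP => wvadj; apply: (tf x w v); rewrite xw wvadj hxv.
  exists w; split.
    rewrite !inE negb_or wv /=; move: nwv; rewrite /uadj negb_or.
    by case/andP.
  apply: connect1; rewrite /induced_adj xS xw !inE wv.
  by [].
case/ncomp_gt1: gt1 => x1 [x2 [x1S x2S nc]].
have [y1 [y1S c1]] := good x1 x1S.
have [y2 [y2S c2]] := good x2 x2S.
apply/ncomp_gt1; exists y1, y2; split => //.
apply/negP => c12; move/negP: nc; apply.
have sub : ~: in_star arc v \subset [set: T] :\ v.
  by apply/subsetP => z; rewrite !inE negb_or andbT; case/andP.
have c12' := @conn_mono T arc _ _ y1 y2 sub c12.
apply: connect_trans c1 _; apply: connect_trans c12' _.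
by rewrite ia_sym.
Qed.
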